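(* Let $G$ be a finite, simple, undirected, connected graph with $n$ vertices. Then $\gamma_3(G)+\kappa(G)=2n-2$ if and only if $G$ is isomorphic to $K_4$, $C_4$ or $K_{1,2}$.
   Context: In a graph $G=(V,E)$, a vertex dominates itself and its neighbours. A set $S\subseteq V$ is a three dominating set of $G$ if every vertex in $V\setminus S$ is dominated by at least three vertices of $S$ (equivalently, every vertex of $V\setminus S$ has at least three neighbours in $S$). The three domination number $\gamma_3(G)$ is the minimum cardinality of a three dominating set of $G$. The connectivity $\kappa(G)$ of a connected graph $G$ is the minimum number of vertices whose removal results in a disconnected or trivial (one-vertex) graph; in particular $\kappa(K_n)=n-1$. $C_n$ denotes the cycle on $n$ vertices and $K_{m,n}$ the complete bipartite graph with parts of sizes $m$ and $n$. *)

(* Defs.v *)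
(* A finite simple graph is a symmetric irreflexive
   relation e : rel T on a finType T (vertex set = all of T). *)
From mathcomp Require Import all_boot all_order.
Set Implicit Arguments. Unset Strict Implicit. Unset Printing Implicit Defensive.

Section Graphs.
Variable T : finType.
Variable e : rel T.

Definition gconnected : Prop :=
  0 < #|T| /\ forall x y : T, connect e x y.

Definition del_rel (S : {set T}) : rel T :=
  [rel x y | [&& e x y, x \notin S & y \notin S]].

Definition disconnecting (S : {set T}) : bool :=
  (#|~: S| <= 1) ||
  [exists x, exists y, [&& x \notin S, y \notin S & ~~ connect (del_rel S) x y]].

Definition kappa : nat := \big[minn/#|T|]_(S : {set T} | disconnecting S) #|S|.

Definition three_dominating (S : {set T}) : bool :=
  [forall v, (v \notin S) ==> (3 <= #|[set u in S | e v u]|)].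

Definition gamma3 : nat := \big[minn/#|T|]_(S : {set T} | three_dominating S) #|S|.

End Graphs.

Definition gisomorphic (T U : finType) (e : rel T) (f : rel U) : Prop :=
  exists g : T -> U, bijective g /\ forall x y, e x y = f (g x) (g y).

Definition K4_rel : rel 'I_4 := fun x y => x != y.
Definition C4_rel : rel 'I_4 :=
  fun x y => (x.+1 %% 4 == y :> nat) || (y.+1 %% 4 == x :> nat).
Definition K12_rel : rel 'I_3 :=
  fun x y => (x != y) && ((x == 0 :> nat) || (y == 0 :> nat)).

(* Main.v *)
Require Import Defs.
From mathcomp Require Import all_boot all_order.
From mathcomp Require Import zify.
Set Implicit Arguments. Unset Strict Implicit. Unset Printing Implicit Defensive.

Lemma bigmin_le_seq (I : eqType) (P : pred I) (F : I -> nat) m j (r : seq I) :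
  j \in r -> P j -> \big[minn/m]_(i <- r | P i) F i <= F j.
Proof.
elim: r => // a r IH; rewrite inE big_cons => /orP [/eqP <- -> | Hj Pj].
  exact: geq_minl.
case: ifP => _; last exact: IH.
by apply: leq_trans (geq_minr _ _) (IH Hj Pj).
Qed.

Lemma bigmin_le_fin (I : finType) (P : pred I) (F : I -> nat) m j :
  P j -> \big[minn/m]_(i | P i) F i <= F j.
Proof. by apply: bigmin_le_seq; rewrite mem_index_enum. Qed.

Section G.
Variables (T : finType) (e : rel T).
Hypothesis (e_sym : symmetric e) (e_irr : irreflexive e).

Lemma edge_neq x y : e x y -> x != y.
Proof. by apply: contraTneq => ->; rewrite e_irr. Qed.

Lemma gamma3_le_set S : three_dominating e S -> gamma3 e <= #|S|.
Proof. exact: bigmin_le_fin. Qed.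

Lemma gamma3_le : gamma3 e <= #|T|.
Proof.
apply: (big_ind (fun x => x <= #|T|)) => //.
- by move=> x y Hx Hy; rewrite geq_min Hx.
- by move=> S _; apply: max_card.
Qed.

Lemma three_distinct (A : {set T}) : 3 <= #|A| ->
  exists a b c, [/\ a \in A, b \in A, c \in A & [/\ a != b, a != c & b != c]].
Proof.
move=> H.
have /card_gt0P [a Ha] : 0 < #|A| by apply: leq_trans H; rewrite ltnS.
have H2 : 2 <= #|A :\ a| by move: H; rewrite (cardsD1 a) Ha.
have /card_gt0P [b Hb] : 0 < #|A :\ a| by apply: leq_trans H2.
have H3 : 1 <= #|A :\ a :\ b| by move: H2; rewrite (cardsD1 b) Hb.
have /card_gt0P [c Hc] := H3.
move: Hb Hc; rewrite !inE => /andP[ba bA] /and3P[cb ca cA].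
exists a, b, c; split => //; split; by rewrite // eq_sym.
Qed.

Lemma card3 (a b c : T) : a != b -> a != c -> b != c -> #|[set a; b; c]| = 3.
Proof.
move=> ab ac bc; rewrite setUC cardsU1 cards2 !inE ab.
by rewrite eq_sym (negbTE ac) eq_sym (negbTE bc).
Qed.

Lemma gamma3_ge : minn #|T| 3 <= gamma3 e.
Proof.
apply: (big_ind (fun x => minn #|T| 3 <= x)) => //.
- exact: geq_minl.
- by move=> x y Hx Hy; rewrite leq_min Hx Hy.
move=> S /forallP HS.
case: (pickP [pred v | v \notin S]) => [v /= Hv | H0].
- have := HS v; rewrite Hv /= => H3.
  apply: leq_trans (geq_minr _ _) _; apply: leq_trans H3 _.
  by apply: subset_leq_card; apply/subsetP => u; rewrite inE => /andP[].
- have -> : S = setT.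
    by apply/setP => v; rewrite inE; move: (H0 v) => /= /negbFE.
  by rewrite cardsT geq_minl.
Qed.

Definition deg_le2 := forall v a b c, e v a -> e v b -> e v c -> [|| a == b, a == c | b == c].

Lemma nbr_le2 v : deg_le2 -> #|[set u | e v u]| <= 2.
Proof.
move=> H; rewrite leqNgt; apply/negP => /three_distinct [a [b [c [Ha Hb Hc [ab ac bc]]]]].
move: Ha Hb Hc; rewrite !inE => Ha Hb Hc.
by move: (H v a b c Ha Hb Hc); rewrite (negbTE ab) (negbTE ac) (negbTE bc).
Qed.

Lemma gamma3_full : deg_le2 -> gamma3 e = #|T|.
Proof.
move=> H; apply/eqP; rewrite eqn_leq gamma3_le /=.
apply: (big_ind (fun x => #|T| <= x)) => //.
- by move=> x y Hx Hy; rewrite leq_min Hx Hy.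
move=> S /forallP HS.
case: (pickP [pred v | v \notin S]) => [v /= Hv | H0].
- have := HS v; rewrite Hv /= => H3.
  have H3' : 3 <= #|[set u | e v u]|.
    apply: leq_trans H3 _; apply: subset_leq_card; apply/subsetP => u.
    by rewrite !inE => /andP[].
  by move: (nbr_le2 v H); rewrite leqNgt (leq_trans _ H3').
- have -> : S = setT.
    by apply/setP => v; rewrite inE; move: (H0 v) => /= /negbFE.
  by rewrite cardsT.
Qed.

Lemma gamma3_drop v a b c : e v a -> e v b -> e v c -> a != b -> a != c -> b != c ->
  gamma3 e <= #|T|.-1.
Proof.
move=> Ha Hb Hc ab ac bc.
rewrite -(cardsC1 v); apply: gamma3_le_set; apply/forallP => w.
rewrite !inE negbK; apply/implyP => /eqP ->.
rewrite -(card3 ab ac bc); apply: subset_leq_card; apply/subsetP => u.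
by rewrite !inE => /orP [/orP [] | ] /eqP ->; rewrite eq_sym edge_neq.
Qed.

Lemma gamma3_complete3 : (forall x y, x != y -> e x y) -> 3 <= #|T| -> gamma3 e <= 3.
Proof.
move=> Hc; rewrite -cardsT => /three_distinct [a [b [c [_ _ _ [ab ac bc]]]]].
rewrite -(card3 ab ac bc); apply: gamma3_le_set; apply/forallP => w.
apply/implyP => Hw.
rewrite -{1}(card3 ab ac bc); apply: subset_leq_card.
apply/subsetP => u Hu; rewrite inE Hu /= Hc //.
by apply: contraNneq Hw => ->.
Qed.

Lemma kappa_le_set S : disconnecting e S -> kappa e <= #|S|.
Proof. exact: bigmin_le_fin. Qed.

Lemma noedge_nconn S x y : x != y -> (forall z, ~~ del_rel e S x z) ->
  ~~ connect (del_rel e S) x y.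
Proof.
move=> xy H; apply/negP => /connectP [[|z p] /= Hp Hy].
  by rewrite Hy eqxx in xy.
by move: Hp; move: (H z) => /= /negbTE ->.
Qed.

Lemma kappa_le_nbr v : kappa e <= #|[set u | e v u]|.
Proof.
apply: kappa_le_set; rewrite /disconnecting.
set S := [set u | e v u].
case: (leqP #|~: S| 1) => [H1|H]; first by apply/orP; left. apply/orP; right.
have vS : v \notin S by rewrite inE e_irr.
have vS' : v \in ~: S by rewrite inE.
have /card_gt0P [w Hw] : 0 < #|~: S :\ v|.
  by move: H; rewrite (cardsD1 v) vS'.
move: Hw; rewrite !inE => /andP [wv wS].
apply/existsP; exists v; apply/existsP; exists w.
rewrite vS /= inE wS /=; apply: noedge_nconn; first by rewrite eq_sym.
move=> z; rewrite /del_rel /= /S !inE; by case: (e v z); rewrite ?andbF.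
Qed.

Lemma kappa_le_n1 : 0 < #|T| -> kappa e <= #|T|.-1.
Proof.
move=> /card_gt0P [v _]; rewrite -(cardsC1 v); apply: kappa_le_set.
by rewrite /disconnecting setCK cards1.
Qed.

Lemma kappa_ge1 : gconnected e -> 1 < #|T| -> 0 < kappa e.
Proof.
move=> [_ Hc] H1.
apply: (big_ind (fun x => 0 < x)) => //.
- by apply: leq_trans H1.
- by move=> x y Hx Hy; rewrite leq_min Hx Hy.
move=> S HS; rewrite lt0n; apply/negP => /eqP/cards0_eq S0; subst S.
move: HS; rewrite /disconnecting setC0 cardsT leqNgt H1 /=.
move/existsP => [x /existsP [y]]; rewrite !inE /=.
rewrite (@eq_connect _ _ e) ?Hc //.
by move=> a b; rewrite /del_rel /= !in_set0 /= andbT.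
Qed.

Lemma kappa_complete : (forall x y, x != y -> e x y) -> #|T|.-1 <= kappa e.
Proof.
move=> Hc.
apply: (big_ind (fun x => #|T|.-1 <= x)) => //.
- exact: leq_pred.
- by move=> x y Hx Hy; rewrite leq_min Hx Hy.
move=> S; rewrite /disconnecting => /orP [H|/existsP[x /existsP[y /and3P[xS yS]]]].
- have := cardsC S; lia.
- case: (eqVneq x y) => [->|xy]; first by rewrite connect0.
  by rewrite (@connect1 _ _ x y) // /del_rel /= Hc // xS yS.
Qed.

Lemma kappa_notcomplete x y : x != y -> ~~ e x y -> kappa e <= #|T| - 2.
Proof.
move=> xy nxy.
have HS : #|~: [set x; y]| = #|T| - 2.
  have := cardsC [set x; y]; rewrite cards2 xy; lia.
rewrite -HS; apply: kappa_le_set; apply/orP; right.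
apply/existsP; exists x; apply/existsP; exists y.
rewrite !inE !eqxx orbT /=; apply: noedge_nconn => // z.
rewrite /del_rel /= !inE !negbK; apply/negP => /and3P [exz _ /orP [] /eqP Hz]; subst z.
- by rewrite e_irr in exz.
- by rewrite exz in nxy.
Qed.

Lemma kappa_ge2 : 2 < #|T| ->
  (forall x y, x != y -> ~~ e x y -> exists z1 z2,
      [/\ z1 != z2, e x z1, e z1 y, e x z2 & e z2 y]) -> 1 < kappa e.
Proof.
move=> H3 Hcn.
apply: (big_ind (fun x => 1 < x)) => //.
- by apply: leq_trans H3.
- by move=> x y Hx Hy; rewrite leq_min Hx Hy.
move=> S; rewrite /disconnecting ltnNge; apply: contraL => S1.
rewrite negb_or; apply/andP; split.
  rewrite -ltnNge; have := cardsC S; lia.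
rewrite negb_exists; apply/forallP => x; rewrite negb_exists; apply/forallP => y.
apply/negP => /and3P [xS yS]; apply/negP; rewrite negbK.
case: (eqVneq x y) => [->|xy]; first by rewrite connect0.
case exy: (e x y).
  by rewrite (@connect1 _ _ x y) // /del_rel /= exy xS yS.
have [z1 [z2 [z12 e1 e1' e2 e2']]] := Hcn x y xy (negbT exy).
have [z [zS ez ez']] : exists z, [/\ z \notin S, e x z & e z y].
  case: (boolP (z1 \in S)) => z1S; last by exists z1.
  case: (boolP (z2 \in S)) => z2S; last by exists z2.
  have : #|[set z1; z2]| <= #|S|.
    by apply: subset_leq_card; apply/subsetP => u; rewrite !inE => /orP [] /eqP ->.
  by rewrite cards2 z12; move: S1; lia.
apply: (connect_trans (y := z)); apply: connect1; rewrite /del_rel /= ?ez ?ez' ?xS ?yS ?zS //.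
Qed.

Lemma all_set (A : {set T}) : #|A| = #|T| -> forall w, w \in A.
Proof.
move=> H w; have -> : A = setT.
  by apply/eqP; rewrite eqEcard subsetT /= cardsT H.
by rewrite in_setT.
Qed.

Lemma mk_iso (k : nat) (R : rel 'I_k) (h : 'I_k -> T) :
  injective h -> #|T| = k -> (forall i j, e (h i) (h j) = R i j) -> gisomorphic e R.
Proof.
move=> hi Hk Hr.
have hb : bijective h by apply: inj_card_bij => //; rewrite card_ord Hk.
case: hb => g hg gh.
exists g; split; first by exists h.
by move=> x y; rewrite -{1}(gh x) -{1}(gh y) Hr.
Qed.

End G.

Ltac dI3 x := case: x => [[|[|[|?]]] ?] //.
Ltac dI4 x := case: x => [[|[|[|[|?]]]] ?] //.

Lemma C4_deg (a b c d : 'I_4) : C4_rel a b -> C4_rel a c -> C4_rel a d ->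
  [|| b == c, b == d | c == d].
Proof. dI4 a; dI4 b; dI4 c; dI4 d. Qed.

Lemma K12_deg (a b c d : 'I_3) : K12_rel a b -> K12_rel a c -> K12_rel a d ->
  [|| b == c, b == d | c == d].
Proof. dI3 a; dI3 b; dI3 c; dI3 d. Qed.

Lemma C4_common (a b : 'I_4) : a != b -> ~~ C4_rel a b -> exists i1 i2 : 'I_4,
  [&& i1 != i2, C4_rel a i1, C4_rel i1 b, C4_rel a i2 & C4_rel i2 b].
Proof.
dI4 a; dI4 b => _ _;
  first [ by exists (@Ordinal 4 1 isT), (@Ordinal 4 3 isT)
        | by exists (@Ordinal 4 0 isT), (@Ordinal 4 2 isT) ].
Qed.

Lemma K12_1 (i : 'I_3) : K12_rel (@Ordinal 3 1 isT) i -> val i = 0.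
Proof. by dI3 i. Qed.

Theorem theorem3p2 (T : finType) (e : rel T)
  (e_sym : symmetric e) (e_irr : irreflexive e) (e_conn : gconnected e) :
  gamma3 e + kappa e = 2 * #|T| - 2 <->
  [\/ gisomorphic e K4_rel, gisomorphic e C4_rel | gisomorphic e K12_rel].
Proof.
have n1 : 0 < #|T| := e_conn.1.
have gle := gamma3_le e. have gge := gamma3_ge e. have kle := kappa_le_n1 e n1.
split.
- move=> Heq.
  have n2 : 1 < #|T| by move: gge Heq kle; lia.
  have k1 := kappa_ge1 e_conn n2.
  case: (boolP [exists x, exists y, (x != y) && ~~ e x y]) =>
      [/existsP [x /existsP [y /andP [xy nxy]]] | Hcomp].
  + have kle2 := kappa_notcomplete e_irr xy nxy.
    have Hg : gamma3 e = #|T| by lia.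
    have Hk : kappa e = #|T| - 2 by lia.
    have Hdeg : deg_le2 e.
      move=> v a b c Ha Hb Hc; apply/contraT; rewrite !negb_or => /and3P [ab ac bc].
      have := gamma3_drop e_irr Ha Hb Hc ab ac bc; lia.
    have Hnb v : #|T| - 2 <= #|[set u | e v u]| by rewrite -Hk kappa_le_nbr.
    have Hnb2 v : #|[set u | e v u]| <= 2 := nbr_le2 v Hdeg.
    have n4 : #|T| <= 4 by have := Hnb x; have := Hnb2 x; lia.
    have [N3|N4] : #|T| = 3 \/ #|T| = 4 by lia.
    * apply: Or33.
      have /card_gt0P [z Hz] : 0 < #|~: [set x; y]|.
        by have := cardsC [set x; y]; rewrite cards2 xy; lia.
      move: Hz; rewrite !inE negb_or => /andP [zx zy].
      have xz : x != z by rewrite eq_sym.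
      have yz : y != z by rewrite eq_sym.
      have Hall := all_set (A := [set x; y; z]) (etrans (card3 xy xz yz) (esym N3)).
      have nyx : ~~ e y x by rewrite e_sym.
      have exz : e x z.
        have := Hnb x; rewrite N3 /= => /card_gt0P [u]; rewrite inE => exu.
        move: (Hall u); rewrite !inE => /orP [/orP [] | ] /eqP Hu; subst u => //.
        - by rewrite e_irr in exu.
        - by rewrite exu in nxy.
      have eyz : e y z.
        have := Hnb y; rewrite N3 /= => /card_gt0P [u]; rewrite inE => eyu.
        move: (Hall u); rewrite !inE => /orP [/orP [] | ] /eqP Hu; subst u => //.
        - by rewrite eyu in nyx.
        - by rewrite e_irr in eyu.
      have ezx : e z x by rewrite e_sym.
      have ezy : e z y by rewrite e_sym.
      have nxy' : e x y = false by apply: negbTE.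
      have nyx' : e y x = false by apply: negbTE.
      apply: (mk_iso (h := fun i : 'I_3 => nth z [:: z; x; y] i)) => //.
      - move=> i j; dI3 i; dI3 j => /= H; try (by apply/val_inj);
          move: zx zy xy; rewrite H eqxx //= ?andbF.
      - move=> i j; dI3 i; dI3 j; by rewrite /= ?e_irr ?exz ?eyz ?ezx ?ezy ?nxy' ?nyx'.
    * apply: Or32.
      have Hn u : #|[set w | e u w]| = 2 by have := Hnb u; have := Hnb2 u; lia.
      have [v _] : exists v : T, true by case/card_gt0P: n1 => v; exists v.
      have /cards2P [a [b [ab Hab]]] : #|[set u | e v u]| == 2 by rewrite Hn.
      have Nv u : e v u = (u == a) || (u == b).
        by move/setP: Hab => /(_ u); rewrite !inE.
      have eva : e v a by rewrite Nv eqxx.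
      have evb : e v b by rewrite Nv eqxx orbT.
      have va := edge_neq e_irr eva.
      have vb := edge_neq e_irr evb.
      have /card_gt0P [w Hw] : 0 < #|~: [set v; a; b]|.
        by have := cardsC [set v; a; b]; rewrite card3 // N4; lia.
      move: Hw; rewrite !inE !negb_or => /andP [/andP [wv wa] wb].
      have vw : v != w by rewrite eq_sym.
      have aw : a != w by rewrite eq_sym.
      have bw : b != w by rewrite eq_sym.
      have ba : b != a by rewrite eq_sym.
      have Hall : forall u, u \in [set v; a; b; w].
        apply: all_set; rewrite N4 setUC cardsU1 (card3 va vb ab) !inE.
        by rewrite (negbTE wv) (negbTE wa) (negbTE wb).
      have nvw : ~~ e v w by rewrite Nv negb_or wa wb.
      have nab : ~~ e a b.
        apply/negP => eab.
        have eav : e a v by rewrite e_sym.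
        have eba : e b a by rewrite e_sym.
        have ebv : e b v by rewrite e_sym.
        have naw : ~~ e a w.
          apply/negP => eaw; move: (Hdeg a v b w eav eab eaw).
          by rewrite (negbTE vb) (negbTE vw) (negbTE bw).
        have nbw : ~~ e b w.
          apply/negP => ebw; move: (Hdeg b v a w ebv eba ebw).
          by rewrite (negbTE va) (negbTE vw) (negbTE aw).
        have := Hn w; have : #|[set u | e w u]| = 0.
          apply: eq_card0 => u; rewrite !inE.
          move: (Hall u); rewrite !inE => /orP [/orP [/orP [] | ] | ] /eqP ->.
          - by rewrite e_sym (negbTE nvw).
          - by rewrite e_sym (negbTE naw).
          - by rewrite e_sym (negbTE nbw).
          - by rewrite e_irr.
        by move=> ->.
      have eaw : e a w.
        apply/contraT => naw.
        have : #|[set u | e a u]| <= #|[set v]|.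
          apply: subset_leq_card; apply/subsetP => u; rewrite !inE => eau.
          move: (Hall u); rewrite !inE => /orP [/orP [/orP [] | ] | ] /eqP Hu;
            subst u => //.
          - by rewrite e_irr in eau.
          - by rewrite eau in nab.
          - by rewrite eau in naw.
        by rewrite cards1 Hn.
      have ebw : e b w.
        apply/contraT => nbw.
        have nba : ~~ e b a by rewrite e_sym.
        have : #|[set u | e b u]| <= #|[set v]|.
          apply: subset_leq_card; apply/subsetP => u; rewrite !inE => ebu.
          move: (Hall u); rewrite !inE => /orP [/orP [/orP [] | ] | ] /eqP Hu;
            subst u => //.
          - by rewrite ebu in nba.
          - by rewrite e_irr in ebu.
          - by rewrite ebu in nbw.
        by rewrite cards1 Hn.
      have eav : e a v by rewrite e_sym.
      have ebv : e b v by rewrite e_sym.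
      have ewa : e w a by rewrite e_sym.
      have ewb : e w b by rewrite e_sym.
      have f1 : e v w = false by apply: negbTE.
      have f2 : e w v = false by rewrite e_sym; apply: negbTE.
      have f3 : e a b = false by apply: negbTE.
      have f4 : e b a = false by rewrite e_sym; apply: negbTE.
      apply: (mk_iso (h := fun i : 'I_4 => nth v [:: v; a; w; b] i)) => //.
      - move=> i j; dI4 i; dI4 j => /= H; try (by apply/val_inj);
          move: va vb vw ab aw bw; rewrite H eqxx //= ?andbF.
      - move=> i j; dI4 i; dI4 j;
          by rewrite /= ?e_irr ?eva ?evb ?eaw ?ebw ?eav ?ebv ?ewa ?ewb ?f1 ?f2 ?f3 ?f4.
  + have Hc : forall x y, x != y -> e x y.
      move=> x y xy; apply/contraT => nxy; case/negP: Hcomp.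
      by apply/existsP; exists x; apply/existsP; exists y; rewrite xy.
    have kge := kappa_complete Hc.
    have n4 : 3 < #|T| by move: gge Heq kle kge; lia.
    have N4 : #|T| = 4 by have := gamma3_complete3 Hc (ltnW n4); lia.
    apply: Or31.
    apply: (mk_iso (h := fun i : 'I_4 => (enum_val (cast_ord (esym N4) i) : T))) => //.
    - by move=> i j /enum_val_inj /cast_ord_inj.
    - move=> i j; rewrite /K4_rel; case: (eqVneq i j) => [->|ij]; first by rewrite e_irr.
      rewrite Hc //; apply: contra ij => /eqP /enum_val_inj /cast_ord_inj ->.
      by [].
- case=> [[g [gb Hr]] | [g [gb Hr]] | [g [gb Hr]]];
    have N := bij_eq_card gb; rewrite card_ord in N;
    case: gb => h gh hg.
  + have Hc : forall x y, x != y -> e x y.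
      by move=> x y xy; rewrite Hr /K4_rel (inj_eq (can_inj gh)).
    have := kappa_complete Hc; have := gamma3_complete3 Hc.
    by rewrite N => /(_ isT); move: gge kle; rewrite N; lia.
  + have Hdeg : deg_le2 e.
      move=> v a b c; rewrite !Hr => Ha Hb Hc.
      by have := C4_deg Ha Hb Hc; rewrite !(inj_eq (can_inj gh)).
    have Hg := gamma3_full Hdeg.
    have k2 : 1 < kappa e.
      apply: kappa_ge2; first by rewrite N.
      move=> x y xy nxy.
      have [i1 [i2 /and5P [i12 H1 H2 H3 H4]]] : exists i1 i2 : 'I_4,
        [&& i1 != i2, C4_rel (g x) i1, C4_rel i1 (g y), C4_rel (g x) i2 & C4_rel i2 (g y)].
        by apply: C4_common; rewrite ?(inj_eq (can_inj gh)) // -Hr.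
      exists (h i1), (h i2); rewrite !Hr !hg (inj_eq (can_inj hg)); by split.
    have [v _] : exists v : T, true by case/card_gt0P: n1 => v; exists v.
    have := kappa_le_nbr e_irr v; have := nbr_le2 v Hdeg.
    by move: Hg k2; rewrite N; lia.
  + have Hdeg : deg_le2 e.
      move=> v a b c; rewrite !Hr => Ha Hb Hc.
      by have := K12_deg Ha Hb Hc; rewrite !(inj_eq (can_inj gh)).
    have Hg := gamma3_full Hdeg.
    have k1 : 0 < kappa e by apply: kappa_ge1 => //; rewrite N.
    have : #|[set u | e (h (@Ordinal 3 1 isT)) u]| <= #|[set h (@Ordinal 3 0 isT)]|.
      apply: subset_leq_card; apply/subsetP => u; rewrite !inE Hr hg => /K12_1 Hu.
      by apply/eqP; rewrite -(gh u); congr h; apply/val_inj; rewrite /= Hu.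
    have := kappa_le_nbr e_irr (h (@Ordinal 3 1 isT)); rewrite cards1.
    by move: Hg k1; rewrite N; lia.
Qed.
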